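(* Let $R$ be a ring, $\mathcal{L}$ a class of left $R$-modules, $M$ a bounded below complex and $N$ an exact complex which is $\mathrm{Hom}_R(\mathcal{L},-)$-exact. If for every $n\in\mathbb{Z}$ every morphism $M_n\to Z_n(N)$ factors through a module in $\mathcal{L}$, then every morphism of complexes $M\to N$ is null-homotopic via a homotopy $s$ whose components $s_n:M_n\to N_{n+1}$ each factor through a module of $\mathcal{L}$.
   Context: Complexes are homologically indexed, $Z_n(N)=\mathrm{Ker}\,d_n^N$. A complex $M$ is bounded below if there is $b$ with $M_n=0$ for all $n\le b$. A complex $X$ is $\mathrm{Hom}_R(\mathcal{L},-)$-exact if the complex of abelian groups $\mathrm{Hom}_R(L,X)$ is exact for every $L\in\mathcal{L}$. *)

(* Defs.v *)
From HB Require Import structures.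
From mathcomp Require Import all_boot all_order all_algebra.
Set Implicit Arguments. Unset Strict Implicit. Unset Printing Implicit Defensive.
Import GRing.Theory Num.Theory.
Local Open Scope ring_scope.

(* Following the "complex shape" convention, the differential is given as a
   family  dif i j : C_i -> C_j  which is zero unless j = i - 1; the paper's
   d_n is  dif n (n - 1). *)
Record complex (R : pzRingType) := Complex {
  obj :> int -> lmodType R;
  dif : forall i j : int, {linear obj i -> obj j};
  dif_shape : forall (i j : int), j <> i - 1 -> forall x, dif i j x = 0;
  dif_comp : forall (i j k : int) x, dif j k (dif i j x) = 0
}.

Definition is_chain_map (R : pzRingType) (M N : complex R)
  (f : forall n : int, {linear M n -> N n}) : Prop :=
  forall (i j : int) (x : M i), f j (dif M i j x) = dif N i j (f i x).

Definition bounded_below (R : pzRingType) (M : complex R) : Prop :=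
  exists b : int, forall n : int, n <= b -> forall x : M n, x = 0.

(* Exact: Ker d_n = Im d_{n+1} for all n (Im in Ker is automatic). *)
Definition exact_complex (R : pzRingType) (N : complex R) : Prop :=
  forall (n : int) (x : N n), dif N n (n - 1) x = 0 ->
    exists y : N (n + 1), dif N (n + 1) n y = x.

(* Hom_R(L, N) is exact for every L in the class: every map L -> N_n
   landing in Z_n(N) lifts through d_{n+1}. *)
Definition Hom_exact (R : pzRingType) (cls : lmodType R -> Prop)
  (N : complex R) : Prop :=
  forall (L : lmodType R), cls L ->
  forall (n : int) (phi : {linear L -> N n}),
    (forall y, dif N n (n - 1) (phi y) = 0) ->
    exists psi : {linear L -> N (n + 1)},
      forall y, dif N (n + 1) n (psi y) = phi y.

Definition factors_through (R : pzRingType) (cls : lmodType R -> Prop)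
  (U V : lmodType R) (f : U -> V) : Prop :=
  exists L : lmodType R, cls L /\
    exists (g : {linear U -> L}) (h : {linear L -> V}),
      forall x, f x = h (g x).

(* A morphism into the submodule Z_n(N) is rendered as a linear map into N_n
   with image in Ker d_n; the factorization L -> Z_n(N) likewise. *)
Definition cycles_factor (R : pzRingType) (cls : lmodType R -> Prop)
  (M N : complex R) : Prop :=
  forall (n : int) (g : {linear M n -> N n}),
    (forall x, dif N n (n - 1) (g x) = 0) ->
    exists L : lmodType R, cls L /\
      exists (a : {linear M n -> L}) (b : {linear L -> N n}),
        (forall y, dif N n (n - 1) (b y) = 0) /\
        (forall x, g x = b (a x)).

(* Main.v *)
Require Import Defs.
From HB Require Import structures.
From mathcomp Require Import all_boot all_order all_algebra.
From Stdlib Require Import ClassicalEpsilon.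
Set Implicit Arguments. Unset Strict Implicit.
Import Order.TTheory GRing.Theory Num.Theory.
Local Open Scope ring_scope.

Definition Qp (R : pzRingType) (M N : complex R) (f : forall n : int, {linear M n -> N n})
  (n : int) (T : {linear M n -> N (n+1)}) : Prop :=
  forall y : M (n+1), dif N (n+1) n (T (dif M (n+1) n y)) = f n (dif M (n+1) n y).

Lemma step (R : pzRingType) (cls : lmodType R -> Prop) (M N : complex R)
  (f : forall n : int, {linear M n -> N n}) (hf : is_chain_map f)
  (hex : Hom_exact cls N) (hcyc : cycles_factor cls M N)
  (n : int) (T : {linear M n -> N (n+1)}) (hQ : Qp f T) :
  exists T' : {linear M (n+1) -> N (n+1+1)},
    [/\ Qp f T', factors_through cls T' &
        forall x, f (n+1) x = dif N (n+1+1) (n+1) (T' x) + T (dif M (n+1) n x)].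
Proof.
pose g : {linear M (n+1) -> N (n+1)} := (f (n+1) \- (T \o dif M (n+1) n))%R.
have gZ : forall x, dif N (n+1) (n+1-1) (g x) = 0.
  move=> x; rewrite addrK /g /= raddfB /= -hf hQ subrr //.
have [L [hL [a [b [bZ gab]]]]] := hcyc (n+1) g gZ.
have [psi hpsi] := hex L hL (n+1) b bZ.
exists (psi \o a)%R; split.
- move=> z /=. rewrite hpsi -gab /g /= dif_comp raddf0 subr0 //.
- by exists L; split => //; exists a, psi.
- move=> x /=. rewrite hpsi -gab /g /= subrK //.
Qed.

Definition stepT (R : pzRingType) (cls : lmodType R -> Prop) (M N : complex R)
  (f : forall n : int, {linear M n -> N n}) (hf : is_chain_map f)
  (hex : Hom_exact cls N) (hcyc : cycles_factor cls M N)
  (n : int) (p : {T : {linear M n -> N (n+1)} | Qp f T}) :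
  {T' : {linear M (n+1) -> N (n+1+1)} |
    [/\ Qp f T', factors_through cls T' &
        forall x, f (n+1) x = dif N (n+1+1) (n+1) (T' x) + proj1_sig p (dif M (n+1) n x)]} :=
  constructive_indefinite_description _ (step hf hex hcyc (proj2_sig p)).

Fixpoint idx (b : int) (k : nat) : int := match k with 0%N => b | k.+1 => idx b k + 1 end.

Lemma idxE b k : idx b k = b + k%:Z.
Proof. elim: k => [|k IH] /=; first by rewrite addr0. by rewrite IH -addrA -[in RHS]addn1 PoszD. Qed.

Definition zl (R : pzRingType) (U V : lmodType R) : {linear U -> V} := (\0)%R.

Lemma base (R : pzRingType) (M N : complex R) (f : forall n : int, {linear M n -> N n})
  (b : int) (hb : forall n : int, n <= b -> forall x : M n, x = 0) :
  Qp f (zl (M b) (N (b+1))).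
Proof. by move=> y; rewrite (hb b (lexx b) (dif M (b+1) b y)) !raddf0. Qed.

Fixpoint U (R : pzRingType) (cls : lmodType R -> Prop) (M N : complex R)
  (f : forall n : int, {linear M n -> N n}) (hf : is_chain_map f)
  (hex : Hom_exact cls N) (hcyc : cycles_factor cls M N)
  (b : int) (hb : forall n : int, n <= b -> forall x : M n, x = 0) (k : nat) :
  {T : {linear M (idx b k) -> N (idx b k + 1)} | Qp f T} :=
  match k with
  | 0%N => exist _ (zl _ _) (base f hb)
  | k.+1 => let p := stepT hf hex hcyc (U hf hex hcyc hb k) in
     exist _ (proj1_sig p) (let: And3 q _ _ := proj2_sig p in q)
  end.

Definition castA (R : pzRingType) (M N : complex R) (i n : int) (e : i = n)
  (g : {linear M i -> N (i+1)}) : {linear M n -> N (n+1)} :=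
  eq_rect i (fun k => {linear M k -> N (k+1)}) g n e.

Definition castB (R : pzRingType) (M N : complex R) (i j : int) (e : i + 1 = j)
  (g : {linear M i -> N (i+1)}) : {linear M i -> N j} :=
  eq_rect (i+1) (fun k => {linear M i -> N k}) g j e.

Definition TT (R : pzRingType) (cls : lmodType R -> Prop) (M N : complex R)
  (f : forall n : int, {linear M n -> N n}) (hf : is_chain_map f)
  (hex : Hom_exact cls N) (hcyc : cycles_factor cls M N)
  (b : int) (hb : forall n : int, n <= b -> forall x : M n, x = 0) (n : int) :
  {linear M n -> N (n+1)} :=
  match idx b (absz (n - b)) =P n with
  | ReflectT e => castA e (proj1_sig (U hf hex hcyc hb (absz (n - b))))
  | ReflectF _ => zl _ _
  end.

Definition ss (R : pzRingType) (cls : lmodType R -> Prop) (M N : complex R)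
  (f : forall n : int, {linear M n -> N n}) (hf : is_chain_map f)
  (hex : Hom_exact cls N) (hcyc : cycles_factor cls M N)
  (b : int) (hb : forall n : int, n <= b -> forall x : M n, x = 0) (i j : int) :
  {linear M i -> N j} :=
  match i + 1 =P j with
  | ReflectT e => castB e (TT hf hex hcyc hb i)
  | ReflectF _ => zl _ _
  end.

Lemma ssE (R : pzRingType) (cls : lmodType R -> Prop) (M N : complex R)
  (f : forall n : int, {linear M n -> N n}) (hf : is_chain_map f)
  (hex : Hom_exact cls N) (hcyc : cycles_factor cls M N)
  (b : int) (hb : forall n : int, n <= b -> forall x : M n, x = 0) (i : int) x :
  ss hf hex hcyc hb i (i + 1) x = TT hf hex hcyc hb i x.
Proof. by rewrite /ss; case: (i + 1 =P i + 1) => [e|//]; rewrite (eq_irrelevance e erefl). Qed.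

Lemma TTE (R : pzRingType) (cls : lmodType R -> Prop) (M N : complex R)
  (f : forall n : int, {linear M n -> N n}) (hf : is_chain_map f)
  (hex : Hom_exact cls N) (hcyc : cycles_factor cls M N)
  (b : int) (hb : forall n : int, n <= b -> forall x : M n, x = 0) (k : nat) x :
  TT hf hex hcyc hb (idx b k) x = proj1_sig (U hf hex hcyc hb k) x.
Proof.
have Hk : absz (idx b k - b) = k by rewrite idxE addrC addKr.
rewrite /TT Hk; case: (idx b k =P idx b k) => [e|//]; by rewrite (eq_irrelevance e erefl).
Qed.

Unset Implicit Arguments.

Theorem lemma2p5 (R : pzRingType) (cls : lmodType R -> Prop)
  (M N : complex R) :
  bounded_below M -> exact_complex N -> Hom_exact cls N ->
  cycles_factor cls M N ->
  forall f : forall n : int, {linear M n -> N n},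
    is_chain_map f ->
    exists s : forall i j : int, {linear M i -> N j},
      (forall n : int, factors_through cls (s n (n + 1))) /\
      (forall (n : int) (x : M n),
         f n x = dif N (n + 1) n (s n (n + 1) x) + s (n - 1) n (dif M n (n - 1) x)).
Proof.
move=> [b hb] _ hex hcyc f hf.
have hidx : forall n, b < n -> exists k, n = idx b k.+1.
  move=> n bn; exists (absz (n - b)).-1; rewrite idxE.
  have h0 : (0 < absz (n - b))%N by rewrite absz_gt0 subr_eq0 gt_eqF.
  rewrite prednK // gez0_abs ?subr_ge0 ?ltW //.
  by rewrite addrCA subrr addr0.
exists (ss hf hex hcyc hb); split.
- move=> n; case: (lerP n b) => [nb|bn].
    have [L [hL [a [b' _]]]] := hcyc n (zl _ _) (fun x => raddf0 _).
    exists L; split => //; exists a, (zl _ _) => x.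
    by rewrite (hb n nb x) !raddf0.
  have [k ->] := hidx n bn.
  have [_ [L [hL [a [h ha]]]] _] :=
    proj2_sig (stepT hf hex hcyc (U hf hex hcyc hb k)).
  exists L; split => //; exists a, h => x.
  rewrite ssE (TTE hf hex hcyc hb (k:=k.+1)); exact: ha.
- move=> m x; case: (lerP m b) => [mb|bm].
    by rewrite (hb m mb x) !raddf0 addr0.
  have [k em] := hidx m bm; subst m.
  rewrite [idx b k + 1 - 1]addrK ssE ssE (TTE hf hex hcyc hb (k:=k)).
  rewrite (TTE hf hex hcyc hb (k:=k.+1)).
  have [_ _ ->] := proj2_sig (stepT hf hex hcyc (U hf hex hcyc hb k)).
  by [].
Qed.
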